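(* Let $\Gamma$ be a countably infinite discrete group and let $\boldsymbol{a}$ be a measure preserving action of $\Gamma$. The following are equivalent: (1) every non-trivial factor of $\boldsymbol{a}$ is faithful; (2) every non-trivial normal subgroup of $\Gamma$ acts ergodically (under the restriction of $\boldsymbol{a}$).
   Context: A measure preserving action $\boldsymbol{a}=\Gamma\curvearrowright^a (X,\mu)$ consists of a standard Borel space $X$, a Borel probability measure $\mu$, and a Borel $\mu$-preserving action of $\Gamma$ on $X$. An action $\boldsymbol{b}=\Gamma\curvearrowright^b (Y,\nu)$ is a factor of $\boldsymbol{a}$ if there is a measurable $\pi:X\to Y$ with $\pi_*\mu=\nu$ and, for each $\gamma\in\Gamma$, $\pi(\gamma^a x)=\gamma^b\pi(x)$ for $\mu$-a.e. $x$. An action is non-trivial if its measure is not a point mass. The kernel of $\boldsymbol{b}$ is $\{\gamma\in\Gamma : \nu(\{y : \gamma^b y = y\})=1\}$; $\boldsymbol{b}$ is faithful if its kernel is $\{e\}$. A non-trivial subgroup is one different from $\{e\}$. *)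

(* Defs.v *)
From HB Require Import structures.
From mathcomp Require Import all_boot all_order all_algebra.
From mathcomp Require Import all_classical all_reals all_analysis.
Set Implicit Arguments. Unset Strict Implicit. Unset Printing Implicit Defensive.
Import Order.TTheory GRing.Theory Num.Theory.
Local Open Scope classical_set_scope.
Local Open Scope ring_scope.

Record is_group (G : Type) (mul : G -> G -> G) (one : G) (inv : G -> G) : Prop := {
  grp_assoc : forall x y z, mul x (mul y z) = mul (mul x y) z;
  grp_mul1g : forall x, mul one x = x;
  grp_mulg1 : forall x, mul x one = x;
  grp_mulVg : forall x, mul (inv x) x = one;
  grp_mulgV : forall x, mul x (inv x) = one }.

Definition countably_infinite (G : Type) : Prop :=
  exists f : nat -> G, bijective f.

Definition normal_subgroup (G : Type) (mul : G -> G -> G) (one : G)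
  (inv : G -> G) (N : set G) : Prop :=
  N one /\ (forall x y, N x -> N y -> N (mul x y)) /\ (forall x, N x -> N (inv x))
  /\ (forall g x, N x -> N (mul (mul g x) (inv g))).

(* Standard Borel space: Borel-isomorphic to a Borel subset of the reals
   (equivalently, of a Polish space, by Kuratowski's theorem): there is an
   injective measurable map to R sending measurable sets to Borel sets. *)
Definition standard_borel (R : realType) (d : measure_display)
  (X : measurableType d) : Prop :=
  exists f : X -> R, injective f /\ measurable_fun setT f /\
    (forall A : set X, measurable A -> measurable (f @` A)).

Definition mp_action (R : realType) (G : Type) (mul : G -> G -> G) (one : G)
  (d : measure_display) (X : measurableType d) (mu : probability X R)
  (a : G -> X -> X) : Prop :=
  (forall x, a one x = x) /\
  (forall g h x, a (mul g h) x = a g (a h x)) /\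
  (forall g, measurable_fun setT (a g)) /\
  (forall g (A : set X), measurable A -> mu (a g @^-1` A) = mu A).

Definition is_factor (R : realType) (G : Type)
  (d : measure_display) (X : measurableType d) (mu : probability X R)
  (a : G -> X -> X)
  (d' : measure_display) (Y : measurableType d') (nu : probability Y R)
  (b : G -> Y -> Y) : Prop :=
  exists pi : X -> Y, measurable_fun setT pi /\
    (forall B : set Y, measurable B -> nu B = mu (pi @^-1` B)) /\
    (forall g, {ae mu, forall x, pi (a g x) = b g (pi x)}).

Definition nontrivial_measure (R : realType) (d : measure_display)
  (Y : measurableType d) (nu : probability Y R) : Prop :=
  ~ exists y : Y, forall B : set Y, measurable B -> nu B = \d_y B.

Definition action_kernel (R : realType) (G : Type) (d : measure_display)
  (Y : measurableType d) (nu : probability Y R) (b : G -> Y -> Y) : set G :=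
  [set g | {ae nu, forall y, b g y = y}].

Definition faithful (R : realType) (G : Type) (one : G) (d : measure_display)
  (Y : measurableType d) (nu : probability Y R) (b : G -> Y -> Y) : Prop :=
  action_kernel nu b = [set one].

Definition ergodic_on (R : realType) (G : Type) (d : measure_display)
  (X : measurableType d) (mu : probability X R) (a : G -> X -> X)
  (N : set G) : Prop :=
  forall A : set X, measurable A -> (forall g, N g -> a g @^-1` A = A) ->
    mu A = 0%E \/ mu A = 1%E.

(* Main.v *)
Require Import Defs.
From HB Require Import structures.
From mathcomp Require Import all_boot all_order all_algebra.
From mathcomp Require Import all_classical all_reals all_analysis.
From mathcomp Require Import measurable_realfun measurable_fun_approximation.
From mathcomp Require Import ring lra.
Set Implicit Arguments. Unset Strict Implicit. Unset Printing Implicit Defensive.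
Import Order.TTheory GRing.Theory Num.Theory.
Local Open Scope classical_set_scope.
Local Open Scope ring_scope.

Section Coding.
Variable R : realType.
Definition w (k : nat) : R := (3^-1) ^+ k.
Definition cterm (s : nat -> bool) k : \bar R := ((s k)%:R * w k)%:E.
Definition tail (s : nat -> bool) m : \bar R := (\sum_(m <= j <oo) cterm s j)%E.
Definition encode s : R := fine (tail s 0).
Fixpoint rem (r : R) k : R := match k with
  | 0 => r | k.+1 => if w k <= rem r k then rem r k - w k else rem r k end.
Definition decode (r : R) k : bool := w k <= rem r k.

Lemma w_gt0 k : 0 < w k.
Proof. by rewrite /w exprn_gt0// invr_gt0. Qed.

Lemma cterm_ge0 s k : (0 <= cterm s k)%E.
Proof. by rewrite /cterm lee_fin mulr_ge0// ltW// w_gt0. Qed.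

Lemma tail_ge0 s m : (0 <= tail s m)%E.
Proof. by apply: nneseries_ge0 => n _ _; exact: cterm_ge0. Qed.

Lemma wsum_le m n : \sum_(m <= j < n) w j <= w m * (3/2).
Proof.
have [nm|mn] := leqP n m.
  by rewrite big_geq// mulr_ge0// ltW// w_gt0.
have -> : n = (m + (n - m))%N by rewrite subnKC// ltnW.
rewrite /w geometric_partial_tail geometric_seriesE; last first.
  by rewrite lt_eqF// invf_lt1// ltr1n.
rewrite /=.
have h1 : (1 - 3^-1 : R) = 2/3.
  by field.
rewrite h1 invf_div -mulrA ler_pM2l ?exprn_gt0 ?invr_gt0//.
rewrite -[leRHS]mul1r ler_pM2r// lerBlDr lerDl exprn_ge0// invr_ge0//.
Qed.

Lemma tail_le s m : (tail s m <= (w m * (3/2))%:E)%E.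
Proof.
rewrite /tail; apply: lime_le.
  by apply: is_cvg_ereal_nneg_natsum => n _; exact: cterm_ge0.
apply: nearW => n.
rewrite /cterm sumEFin lee_fin (le_trans _ (wsum_le m n))//.
apply: ler_sum => i _; case: (s i); rewrite ?mul1r ?mul0r //; exact/ltW/w_gt0.
Qed.

Lemma tail_rec s m : tail s m = (cterm s m + tail s m.+1)%E.
Proof.
rewrite /tail (nneseries_split _ 1); last by move=> k _; exact: cterm_ge0.
by rewrite addn1 big_nat1.
Qed.

Lemma tail_fin s m : tail s m \is a fin_num.
Proof.
rewrite ge0_fin_numE ?tail_ge0//; apply: le_lt_trans (tail_le s m) _.
exact: ltry.
Qed.

Lemma hw_lt k : w k.+1 * (3/2) < w k.
Proof.
rewrite -subr_gt0; have -> : w k - w k.+1*(3/2) = w k / 2 by rewrite /w exprSr; field.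
by rewrite divr_gt0 // w_gt0.
Qed.

Lemma rem_encode s k : rem (encode s) k = fine (tail s k).
Proof.
elim: k => [//|k IH] /=.
rewrite IH tail_rec /cterm.
have f1 := tail_fin s k.+1.
have t0 := tail_ge0 s k.+1; have t1 := tail_le s k.+1.
rewrite -(fineK f1) /=.
rewrite -(fineK f1) lee_fin in t0 t1.
set t := fine (tail s k.+1) in t0 t1 *.
move: t1; rewrite lee_fin => t1.
have hw := hw_lt k.
case: (s k); rewrite ?mul1r ?mul0r ?add0r.
  by rewrite lerDl t0 addrC addrK.
by rewrite (leNgt (w k)) (le_lt_trans t1 hw).
Qed.

Lemma decode_encode s : decode (encode s) = s.
Proof.
apply/funext => k; rewrite /decode rem_encode tail_rec /cterm.
have f1 := tail_fin s k.+1.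
have t0 := tail_ge0 s k.+1; have t1 := tail_le s k.+1.
rewrite -(fineK f1) /=.
rewrite -(fineK f1) lee_fin in t0 t1.
set t := fine (tail s k.+1) in t0 t1 *.
move: t1; rewrite lee_fin => t1.
have hw := hw_lt k.
case: (s k); rewrite ?mul1r ?mul0r ?add0r.
  by rewrite lerDl.
by apply/negbTE; rewrite -ltNge (le_lt_trans t1 hw).
Qed.
End Coding.

Section CodingMeas.
Variable R : realType.

Lemma encode_meas d (T : measurableType d) (s : T -> nat -> bool) :
  (forall k, measurable_fun setT (fun t => s t k)) ->
  measurable_fun setT (fun t => @encode R (s t)).
Proof.
move=> ms; rewrite /encode.
change (measurable_fun setT (fine \o (fun t => @tail R (s t) 0))).
apply: measurableT_comp => //.
have -> : (fun t => @tail R (s t) 0) =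
    (fun t => (\sum_(i <oo | i \in xpredT) (fun k t => @cterm R (s t) k) i t)%E).
  by apply/funext => t; rewrite /tail; apply: eq_eseriesr.
apply: ge0_emeasurable_sum.
  by move=> k x _ _; exact: cterm_ge0.
move=> k _; rewrite /cterm; apply/measurable_EFinP.
have -> : (fun t => (s t k)%:R * w R k) = (fun t => if s t k then w R k else 0).
  by apply/funext => t; case: (s t k); rewrite ?mul1r ?mul0r.
by apply: measurable_fun_ifT => //; exact: ms.
Qed.

Lemma rem_meas k : measurable_fun setT (fun r : R => rem r k).
Proof.
elim: k => [|k IH] /=; first exact: measurable_id.
apply: measurable_fun_ifT => //.
- by apply: measurable_realfun.measurable_fun_ler => //.
- by apply: measurable_funB.
Qed.

Lemma decode_meas k : measurable_fun setT (fun r : R => decode r k).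
Proof. by apply: measurable_realfun.measurable_fun_ler => //; exact: rem_meas. Qed.

End CodingMeas.


Lemma archi_nat (R : realType) (x : R) : exists n : nat, x < n%:R.
Proof. by exists (Num.truncn x).+1; exact: truncnS_gt. Qed.

Section Atom.
Context (R : realType) (d : measure_display) (Y : measurableType d) (nu : probability Y R).
Hypothesis h01 : forall B, measurable B -> nu B = 0%E \/ nu B = 1%E.

Lemma negl_T_false : ~ nu.-negligible [set: Y].
Proof.
move/(negligibleP nu measurableT) => h.
by have := probability_setT nu; rewrite h => /eqP; rewrite eq_sym onee_eq0.
Qed.

Lemma compl_negl C : measurable C -> nu.-negligible (~` C) -> nu C = 1%E.
Proof.
move=> mC hn; case: (h01 mC) => // /(negligibleP nu mC) hC; exfalso.
by apply: negl_T_false; rewrite -(setUv C); exact: negligibleU.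
Qed.

Lemma one_compl_negl C : measurable C -> nu C = 1%E -> nu.-negligible (~` C).
Proof.
move=> mC h; apply/(negligibleP nu (measurableC mC)).
have hc := probability_setC nu mC; rewrite h subee // in hc; exact: hc.
Qed.

Lemma atom (f : Y -> R) : injective f -> measurable_fun setT f ->
  exists y, forall B, measurable B -> nu B = \d_y B.
Proof.
move=> finj mf.
pose L t := f @^-1` `]-oo, t].
have mL t : measurable (L t).
  by rewrite /L -[X in measurable X]setTI; apply: mf => //.
pose S := [set t | nu (L t) = 0%E].
have Sne : exists t, S t.
  apply: contrapT => hne; apply: negl_T_false.
  have -> : [set: Y] = \bigcup_n ~` L (- n%:R).
    apply/seteqP; split => // y _ /=.
    have [n hn] := archi_nat (- f y); exists n => //.
    rewrite /L /= in_itv /= => h; rewrite ltrNl in hn.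
    by have := le_lt_trans h hn; rewrite ltxx.
  apply: negligible_bigcup => n; apply: one_compl_negl => //.
  by case: (h01 (mL (- n%:R))) => // h; exfalso; apply: hne; exists (- n%:R).
have [n0 hn0] : exists n : nat, nu (L n%:R) = 1%E.
  apply: contrapT => hne; apply: negl_T_false.
  have -> : [set: Y] = \bigcup_n L n%:R.
    apply/seteqP; split => // y _ /=.
    have [n hn] := archi_nat (f y); exists n => //.
    by rewrite /L /= in_itv /= ltW.
  apply: negligible_bigcup => n; apply/(negligibleP nu (mL _)).
  by case: (h01 (mL n%:R)) => // h; exfalso; apply: hne; exists n.
have Sub : ubound S n0%:R.
  move=> t St; rewrite leNgt; apply/negP => hlt.
  have : (nu (L n0%:R) <= nu (L t))%E.
    by apply: le_measure; rewrite ?inE //; move=> y; rewrite /L /= !in_itv /= => /le_trans; apply; exact: ltW.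
  by rewrite hn0 St lee_fin ler10.
have hsup : has_sup S by split; [case: Sne => t St; exists t | exists n0%:R].
set s := sup S.
have hlow t : t < s -> nu (L t) = 0%E.
  move=> ts; have st0 : 0 < s - t by rewrite subr_gt0.
  have [e Se] := sup_adherent st0 hsup.
  rewrite opprB addrC subrK => te.
  apply/eqP; rewrite eq_le measure_ge0 andbT -Se.
  by apply: le_measure; rewrite ?inE //; move=> y; rewrite /L /= !in_itv /= => /le_trans; apply; exact: ltW.
have hup t : s < t -> nu (L t) = 1%E.
  move=> st; case: (h01 (mL t)) => // h; exfalso.
  have := sup_upper_bound hsup h; rewrite leNgt => /negP; apply; exact: st.
clearbody s.
pose Q := f @^-1` [set s].
have nQ : nu.-negligible (~` Q).
  pose Z := (\bigcup_n L (s - (n.+1%:R)^-1)) `|` (\bigcup_n ~` L (s + (n.+1%:R)^-1)).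
  have ZQ : ~` Q `<=` Z.
    move=> y /= hy.
    have [lt|gt] : f y < s \/ s < f y.
      by move/eqP: hy; rewrite neq_lt => /orP.
    - left; have [n hn] := archi_nat ((s - f y)^-1); exists n => //.
      rewrite /L /= in_itv /=.
      have d0 : 0 < s - f y by rewrite subr_gt0.
      have : (n.+1%:R)^-1 < s - f y.
        rewrite -[X in _ < X](invrK (s - f y)) ltf_pV2 ?posrE ?invr_gt0 //.
        by apply: lt_trans hn _; rewrite ltr_nat.
      by move: (n.+1%:R^-1) => a h; lra.
    - right; have [n hn] := archi_nat ((f y - s)^-1); exists n => //.
      rewrite /L /= in_itv /=.
      have d0 : 0 < f y - s by rewrite subr_gt0.
      have : (n.+1%:R)^-1 < f y - s.
        rewrite -[X in _ < X](invrK (f y - s)) ltf_pV2 ?posrE ?invr_gt0 //.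
        by apply: lt_trans hn _; rewrite ltr_nat.
      move: (n.+1%:R^-1) => a h; apply/negP; rewrite -ltNge; lra.
  apply: (negligibleS ZQ).
  apply: negligibleU; apply: negligible_bigcup => n.
    apply/(negligibleP nu (mL _)); apply: hlow.
    by rewrite ltrBlDr ltrDl invr_gt0.
  by apply: one_compl_negl => //; apply: hup; rewrite ltrDl invr_gt0.
have [y fys] : exists y, f y = s.
  apply: contrapT => hne; apply: negl_T_false.
  suff <- : ~` Q = [set: Y] by [].
  by apply/seteqP; split => // z _ /= hz; apply: hne; exists z.
exists y => B mB; rewrite diracE.
have [yB|yB] := pselect (B y).
  rewrite mem_set //; apply: compl_negl => //; apply: negligibleS nQ.
  by move=> z /= zB fz; apply: zB; rewrite (finj z y) // fys.
rewrite memNset //; apply/(negligibleP nu mB); apply: negligibleS nQ.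
by move=> z /= zB fz; apply: yB; rewrite -(finj z y) // fys.
Qed.
End Atom.


Section Grp.
Context (G : Type) (mul : G -> G -> G) (one : G) (inv : G -> G) (HG : is_group mul one inv).
Let assoc := grp_assoc HG.
Let mul1g := grp_mul1g HG.
Let mulg1 := grp_mulg1 HG.
Let mulVg := grp_mulVg HG.
Let mulgV := grp_mulgV HG.

Lemma inv_uniq x y : mul x y = one -> x = inv y.
Proof. by move=> h; rewrite -[x]mulg1 -(mulgV y) assoc h mul1g. Qed.

Lemma inv1 : inv one = one.
Proof. by apply/esym/inv_uniq; rewrite mul1g. Qed.

Lemma invK x : inv (inv x) = x.
Proof. by apply/esym/inv_uniq; rewrite mulgV. Qed.

Lemma invM x y : inv (mul x y) = mul (inv y) (inv x).
Proof.
apply/esym/inv_uniq.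
by rewrite -assoc (assoc (inv x)) mulVg mul1g mulVg.
Qed.
End Grp.

Section AeHelp.
Context (R : realType).

Lemma ae_pre d (Y : measurableType d) (nu : {measure set Y -> \bar R}) (phi : Y -> Y)
  (mphi : measurable_fun setT phi)
  (hpres : forall B, measurable B -> nu (phi @^-1` B) = nu B) (P : Y -> Prop) :
  {ae nu, forall y, P y} -> {ae nu, forall y, P (phi y)}.
Proof.
move=> [M [mM M0 sub]]; exists (phi @^-1` M); split.
- by rewrite -[X in measurable X]setTI; apply: mphi.
- by rewrite hpres.
- by move=> y /= npy; apply: sub.
Qed.

Lemma ae_pull d (X : measurableType d) d' (Y : measurableType d')
  (mu : {measure set X -> \bar R}) (nu : {measure set Y -> \bar R}) (pi : X -> Y)
  (mpi : measurable_fun setT pi)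
  (hpush : forall B, measurable B -> nu B = mu (pi @^-1` B)) (P : Y -> Prop) :
  {ae nu, forall y, P y} -> {ae mu, forall x, P (pi x)}.
Proof.
move=> [M [mM M0 sub]]; exists (pi @^-1` M); split.
- by rewrite -[X in measurable X]setTI; apply: mpi.
- by rewrite -hpush.
- by move=> y /= npy; apply: sub.
Qed.
End AeHelp.

Section DirB.
Context (R : realType) (G : Type) (mul : G -> G -> G) (one : G) (inv : G -> G)
  (HG : is_group mul one inv) (e : nat -> G) (ei : G -> nat)
  (eK : cancel e ei) (eiK : cancel ei e)
  (d : measure_display) (X : measurableType d) (mu : probability X R)
  (a : G -> X -> X) (Ha : mp_action mul one mu a).

Lemma dirB (H2 : forall N : set G, normal_subgroup mul one inv N -> N <> [set one] ->
     ergodic_on mu a N)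
  (d' : measure_display) (Y : measurableType d') (nu : probability Y R)
  (b : G -> Y -> Y) (HY : standard_borel R Y) (Hb : mp_action mul one nu b)
  (Hf : is_factor mu a nu b) (Hnt : nontrivial_measure nu) : faithful one nu b.
Proof.
have assoc := grp_assoc HG; have mul1g := grp_mul1g HG; have mulg1 := grp_mulg1 HG.
have mulVg := grp_mulVg HG; have mulgV := grp_mulgV HG.
case: Ha => a1 [aM [am amp]].
case: Hb => b1 [bM [bm bmp]].
rewrite /faithful; set K := action_kernel nu b.
have K1 : K one by apply: aeW => y; rewrite b1.
suff KN : K <> [set one] -> False.
  apply/seteqP; split => [g Kg|g ->] //=.
  by apply: contrapT => hg; apply: KN => hK; apply: hg; rewrite hK in Kg.
move=> KN.
have aepre g := ae_pre (bm g) (bmp g).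
have HK : normal_subgroup mul one inv K.
  split; first exact: K1.
  split.
    move=> x y Kx Ky; rewrite /K /action_kernel /=.
    apply: filterS2 Ky (aepre y _ Kx) => z h1 h2.
    by rewrite bM h2 h1.
  split.
    move=> x Kx; rewrite /K /action_kernel /=.
    apply: filterS (aepre (inv x) _ Kx) => z h.
    by rewrite -h -bM mulgV b1.
  move=> g x Kx; rewrite /K /action_kernel /=.
  apply: filterS (aepre (inv g) _ Kx) => z h.
  by rewrite !bM h -bM mulgV b1.
have erg := H2 K HK KN.
case: Hf => pi [mpi [hpush hae]].
have h01 : forall B, measurable B -> nu B = 0%E \/ nu B = 1%E.
  move=> B mB.
  pose P := pi @^-1` B.
  have mP : measurable P by rewrite /P -[X in measurable X]setTI; apply: mpi.
  have hk k : K k -> {ae mu, forall x, pi (a k x) = pi x}.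
    move=> Kk; apply: filterS2 (hae k) (ae_pull mpi hpush Kk) => x h1 h2.
    by rewrite h1 h2.
  have hall : {ae mu, forall x, forall n, K (e n) -> pi (a (e n) x) = pi x}.
    apply: ae_foralln => n.
    have [Kn|Kn] := pselect (K (e n)).
      by apply: filterS (hk _ Kn) => x h _.
    by apply: aeW => x /Kn.
  case: hall => Z [mZ Z0 subZ].
  pose As := \bigcap_n [set x | K (e n) -> P (a (e n) x)].
  have mAs : measurable As.
    apply: bigcapT_measurable => n.
    have [Kn|Kn] := pselect (K (e n)).
      have -> : [set x | K (e n) -> P (a (e n) x)] = a (e n) @^-1` P.
        by apply/seteqP; split => x /=; [apply; exact: Kn | move=> ? ?].
      by rewrite -[X in measurable X]setTI; apply: am.
    have -> : [set x | K (e n) -> P (a (e n) x)] = setT.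
      by apply/seteqP; split => x //= _ /Kn.
    exact: measurableT.
  have inv_As : forall k, K k -> a k @^-1` As = As.
    move=> k Kk; apply/seteqP; split => x /= hx n _ Kn.
    - have Km : K (mul (e n) (inv k)).
        by case: HK => _ [HM [HI _]]; apply: HM => //; apply: HI.
      have := hx (ei (mul (e n) (inv k))) I; rewrite /= eiK -aM -assoc mulVg mulg1; apply; exact: Km.

    - have Km : K (mul (e n) k) by case: HK => _ [HM _]; apply: HM.
      by rewrite -aM; have := hx (ei (mul (e n) k)) I; rewrite /= eiK; apply.
  have sAP : As `<=` P.
    move=> x hx; have := hx (ei one) I; rewrite /= eiK a1; apply; exact: K1.
  have sPA : P `<=` As `|` Z.
    move=> x Px; have [zx|zx] := pselect (Z x); [by right|left].
    move=> n _ Kn /=.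
    have : forall n, K (e n) -> pi (a (e n) x) = pi x.
      by apply: contrapT => hn; apply: zx; apply: subZ.
    by move=> /(_ n Kn); rewrite /P /= => ->.
  have eqm : mu P = mu As.
    apply/eqP; rewrite eq_le; apply/andP; split.
    - apply: (le_trans (le_measure _ _ _ sPA)); rewrite ?inE //.
        exact: measurableU.
      apply: (le_trans (measureU2 mu mAs mZ)); change (mu As + mu Z <= mu As)%E; by rewrite Z0 adde0.
    - by apply: le_measure; rewrite ?inE.
  by rewrite hpush //; case: (erg As mAs inv_As) => h; [left|right]; exact: (etrans eqm h).
case: HY => f [finj [mf _]].
have [y hy] := atom h01 finj mf.
by apply: Hnt; exists y.
Qed.
End DirB.

Section DirA.
Context (R : realType) (G : Type) (mul : G -> G -> G) (one : G) (inv : G -> G)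
  (HG : is_group mul one inv) (e : nat -> G) (ei : G -> nat)
  (eK : cancel e ei) (eiK : cancel ei e).

Definition shift (g : G) (t : nat -> bool) : nat -> bool :=
  fun k => t (ei (mul (inv g) (e k))).

Definition bact (g : G) (r : R) : R :=
  if encode R (decode r) == r then encode R (shift g (decode r)) else r.

Lemma shift1 t : shift one t = t.
Proof.
by apply/funext => k; rewrite /shift (inv1 HG) (grp_mul1g HG) eK.
Qed.

Lemma shiftM g h t : shift (mul g h) t = shift g (shift h t).
Proof.
apply/funext => k; rewrite /shift eiK (invM HG) (grp_assoc HG).
by [].
Qed.

Lemma bact1 r : bact one r = r.
Proof. by rewrite /bact shift1; case: eqP. Qed.

Lemma bactM g h r : bact (mul g h) r = bact g (bact h r).
Proof.
rewrite /bact; case: eqP => E.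
  by rewrite decode_encode eqxx shiftM.
by case: eqP.
Qed.

Lemma bact_meas g : measurable_fun setT (bact g).
Proof.
apply: measurable_fun_ifT.
- apply: measurable_fun_eqr => //; apply: encode_meas => k; exact: decode_meas.
- by apply: encode_meas => k; exact: decode_meas.
- exact: measurable_id.
Qed.
End DirA.

Section DirA2.
Context (R : realType) (G : Type) (mul : G -> G -> G) (one : G) (inv : G -> G)
  (HG : is_group mul one inv) (e : nat -> G) (ei : G -> nat)
  (eK : cancel e ei) (eiK : cancel ei e)
  (d : measure_display) (X : measurableType d) (mu : probability X R)
  (a : G -> X -> X) (Ha : mp_action mul one mu a).

Definition sA (A : set X) (x : X) : nat -> bool := fun k => `[< A (a (inv (e k)) x) >].
Definition piA (A : set X) (x : X) : R := encode R (sA A x).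

Lemma sA_act A g x : shift mul inv e ei g (sA A x) = sA A (a g x).
Proof.
case: Ha => a1 [aM _].
apply/funext => k; rewrite /shift /sA eiK (invM HG) (invK HG) aM.
by [].
Qed.

Lemma piA_act A g x : bact mul inv e ei g (piA A x) = piA A (a g x).
Proof. by rewrite /bact /piA decode_encode eqxx sA_act. Qed.

Lemma piA_meas A : measurable A -> measurable_fun setT (piA A).
Proof.
case: Ha => a1 [aM [am _]] mA.
apply: encode_meas => k; apply: (measurable_fun_bool true).
have -> : setT `&` (fun x => `[< A (a (inv (e k)) x) >]) @^-1` [set true] =
   a (inv (e k)) @^-1` A.
  apply/seteqP; split => x /=.
  - by move=> [_ /asboolP].
  - by move=> h; split => //; apply/asboolP.
by rewrite -[X in measurable X]setTI; apply: am.
Qed.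
End DirA2.

Section DirA3.
Context (R : realType) (G : Type) (mul : G -> G -> G) (one : G) (inv : G -> G)
  (HG : is_group mul one inv) (e : nat -> G) (ei : G -> nat)
  (eK : cancel e ei) (eiK : cancel ei e)
  (d : measure_display) (X : measurableType d) (mu : probability X R)
  (a : G -> X -> X) (Ha : mp_action mul one mu a).

Lemma dirA (H1 : forall (d' : measure_display) (Y : measurableType d') (nu : probability Y R)
     (b : G -> Y -> Y),
     standard_borel R Y -> mp_action mul one nu b ->
     is_factor mu a nu b -> nontrivial_measure nu -> faithful one nu b)
  (N : set G) (HN : normal_subgroup mul one inv N) (Nne : N <> [set one]) :
  ergodic_on mu a N.
Proof.
have assoc := grp_assoc HG; have mul1g := grp_mul1g HG; have mulg1 := grp_mulg1 HG.
have mulVg := grp_mulVg HG; have mulgV := grp_mulgV HG.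
have [a1 [aM [am amp]]] := Ha.
move=> A mA Ainv; apply: contrapT => h01.
pose pA := @piA R G inv e d X a A.
have mpi : measurable_fun setT pA := @piA_meas R G mul one inv e d X mu a Ha A mA.
pose pim : {mfun X >-> R} := mfun_Sub (mem_set mpi : pA \in mfun).
have pimE : (pim : X -> R) = pA by [].
pose nu := distribution mu pim.
have nuE B : nu B = mu (pA @^-1` B) by [].
pose b := @bact R G mul inv e ei.
have hact g x : b g (pA x) = pA (a g x) := (@piA_act R G mul one inv HG e ei eiK d X mu a Ha A g x).
have Hsb : standard_borel R R.
  exists id; split; first exact: inj_id.
  split; first exact: measurable_id.
  by move=> B mB; rewrite image_id.
have Hmp : mp_action mul one nu b.
  split; first by move=> r; exact: (@bact1 R G mul one inv HG e ei eK r).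
  split; first by move=> g h r; exact: (@bactM R G mul one inv HG e ei eiK g h r).
  split; first by move=> g; exact: (@bact_meas R G mul inv e ei g).
  move=> g B mB; change (mu (pA @^-1` (b g @^-1` B)) = mu (pA @^-1` B)).
  have -> : pA @^-1` (b g @^-1` B) = a g @^-1` (pA @^-1` B).
    by apply/seteqP; split => x /=; rewrite hact.
  apply: amp; rewrite -[X in measurable X]setTI; exact: (mpi measurableT _ mB).
have Hfac : is_factor mu a nu b.
  exists pim; split; first exact: (mpi).
  split; first by move=> B mB.
  by move=> g; apply: aeW => x; rewrite pimE hact.
have Hnt : nontrivial_measure nu.
  move=> [y hy].
  pose B0 := [set r : R | decode r (ei one)].
  have mB0 : measurable B0.
    rewrite -[X in measurable X]setTI.
    apply: (decode_meas (ei one)) => //.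
  have h := hy B0 mB0; change (mu (pA @^-1` B0) = \d_y B0) in h; move: h.
  have -> : pA @^-1` B0 = A.
    apply/seteqP; split => x /=; rewrite /B0 /= /piA decode_encode /sA eiK (inv1 HG) a1.
    - by move/asboolP.
    - by move=> h; apply/asboolP.
  rewrite diracE; case: (y \in B0) => /= h; apply: h01; [right|left]; exact: h.
have hf := H1 _ _ nu b Hsb Hmp Hfac Hnt.
have [n Nn n1] : exists2 n, N n & n <> one.
  apply: contrapT => hne; apply: Nne; apply/seteqP; split => g /=.
  - by move=> Ng; apply: contrapT => hg; apply: hne; exists g.
  - by move=> ->; case: HN.
have hinv x : pA (a n x) = pA x.
  rewrite /pA /piA; congr (encode R _); apply/funext => k; rewrite /sA.
  pose n' := mul (mul (inv (e k)) n) (inv (inv (e k))).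
  have Nn' : N n' by case: HN => _ [_ [_ Hc]]; apply: Hc.
  have E : mul (inv (e k)) n = mul n' (inv (e k)) by rewrite /n' -assoc mulVg mulg1.
  rewrite -aM E aM.
  by rewrite -[A (a n' (a (inv (e k)) x))]/((a n' @^-1` A) (a (inv (e k)) x)) (Ainv n' Nn').
have mf : measurable_fun setT (fun y => b n y == y).
  apply: measurable_fun_eqr; [exact: (@bact_meas R G mul inv e ei n) | exact: measurable_id].
have : action_kernel nu b n.
  exists (~` [set y | b n y == y]); split.
  - apply: measurableC; rewrite -[X in measurable X]setTI; exact: (mf measurableT [set true]).
  - change (mu (pA @^-1` (~` [set y | b n y == y])) = 0%E).
    have -> : pA @^-1` (~` [set y | b n y == y]) = set0.
      by apply/seteqP; split => x //=; rewrite hact hinv eqxx.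
    exact: measure0.
  - by move=> y /= h /eqP.
by rewrite /faithful in hf; rewrite hf => /= /n1.
Qed.
End DirA3.

Close Scope ring_scope.
Unset Implicit Arguments. Set Strict Implicit. Set Printing Implicit Defensive.
Local Open Scope classical_set_scope.

Theorem proposition1p1 (R : realType) (G : Type) (mul : G -> G -> G) (one : G)
  (inv : G -> G) (HG : is_group mul one inv) (Hcount : countably_infinite G)
  (d : measure_display) (X : measurableType d) (mu : probability X R)
  (a : G -> X -> X) (HX : standard_borel R X) (Ha : mp_action mul one mu a) :
  (forall (d' : measure_display) (Y : measurableType d') (nu : probability Y R)
     (b : G -> Y -> Y),
     standard_borel R Y -> mp_action mul one nu b ->
     is_factor mu a nu b -> nontrivial_measure nu -> faithful one nu b)
  <->
  (forall N : set G, normal_subgroup mul one inv N -> N <> [set one] ->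
     ergodic_on mu a N).
Proof.
case: Hcount => e [ei eK eiK].
split.
- move=> H1 N HN Nne; exact: (dirA HG eK eiK Ha H1 HN Nne).
- move=> H2 d' Y nu b HY Hb Hf Hnt; exact: (dirB HG eiK Ha H2 HY Hb Hf Hnt).
Qed.
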